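(* Let $f$ satisfy conditions (1) and (2b), and let $n\in\mathbb{N}_0$. Then the series \[ \sum_{k=0}^\infty(-1)^k\frac{p^k}{k!}\,c_{n+2k} \] is absolutely and uniformly convergent for all $p\in[0,\infty)$.
   Context: $f:[0,\infty)\to\mathbb{R}$; $c_n=2\pi\int_0^\infty f(r)\,r^{n+1}dr$. Condition (1): there is a constant $F$ with $0\le f(r)\le F$ for all $r\ge0$, $c_0$ exists and $c_0>0$. Condition (2b): $c_{2n}$ exists for all $n\in\mathbb{N}_0$ and $c_n^{1/n}=o(n^{1/2})$ as $n\to\infty$. *)

(* Defs.v *)
From HB Require Import structures.
From mathcomp Require Import all_boot all_order all_algebra.
From mathcomp Require Import all_classical all_reals all_analysis.
Set Implicit Arguments. Unset Strict Implicit. Unset Printing Implicit Defensive.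
Import Order.TTheory GRing.Theory Num.Theory.
Import numFieldNormedType.Exports.
Local Open Scope classical_set_scope.
Local Open Scope ring_scope.

Section Moments.
Variable R : realType.

Definition cmom_exists (f : R -> R) (n : nat) : Prop :=
  (@lebesgue_measure R).-integrable `[0%R, +oo[%classic
     (fun r => (f r * r ^+ n.+1)%:E).

Definition cmom (f : R -> R) (n : nat) : R :=
  2 * pi * Rintegral (@lebesgue_measure R) `[0%R, +oo[%classic
     (fun r => f r * r ^+ n.+1).

Definition cond1 (f : R -> R) : Prop :=
  (exists F : R, forall r : R, 0 <= r -> 0 <= f r <= F) /\
  cmom_exists f 0 /\ 0 < cmom f 0.

Definition cond2b (f : R -> R) : Prop :=
  (forall n : nat, cmom_exists f (2 * n)) /\
  (forall eps : R, 0 < eps -> exists N : nat, forall m : nat, (N <= m)%N ->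
     powR (cmom f m) (m%:R^-1) <= eps * Num.sqrt (m%:R)).

Definition mterm (f : R -> R) (n : nat) (p : R) (k : nat) : R :=
  (-1) ^+ k * p ^+ k / (k`!)%:R * cmom f (n + 2 * k).

Definition mpartial (f : R -> R) (n : nat) (p : R) (N : nat) : R :=
  \sum_(0 <= k < N) mterm f n p k.

End Moments.

(* Main.v *)
Require Import Defs.
From HB Require Import structures.
From mathcomp Require Import all_boot all_order all_algebra.
From mathcomp Require Import all_classical all_reals all_analysis.
From mathcomp Require Import ring lra zify.
Import Order.TTheory GRing.Theory Num.Theory.
Import numFieldNormedType.Exports.
Local Open Scope classical_set_scope.
Local Open Scope ring_scope.

Lemma cmom_ge0 (R : realType) (f : R -> R) m :
  (forall r, 0 <= r -> 0 <= f r) -> 0 <= cmom f m.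
Proof.
move=> hf; rewrite /cmom; apply: mulr_ge0; first by apply: mulr_ge0 => //; exact: pi_ge0.
apply: Rintegral_ge0 => x /=; rewrite in_itv /= andbT => hx.
by apply: mulr_ge0; [exact: hf | exact: exprn_ge0].
Qed.

Lemma L1 (R : realType) (m : nat) :
  ((m + 2)%:R : R) ^+ m <= expR 2 * (m%:R) ^+ m.
Proof.
case: m => [|m]; first by rewrite !expr0 mulr1; have := expR_ge1Dx (2:R); lra.
set M : R := (m.+1)%:R.
have hM : 0 < M by rewrite ltr0n.
have -> : ((m.+1 + 2)%:R : R) = (1 + 2 / M) * M.
  by rewrite mulrDl mul1r divfK ?gt_eqF // /M natrD.
rewrite exprMn; apply: ler_wpM2r; first by rewrite exprn_ge0 // ltW.
have -> : (expR 2 : R) = expR (2 / M) ^+ m.+1.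
  by rewrite -expRM_natr /M mulrAC -mulrA divff ?gt_eqF // mulr1.
apply: (@lerXn2r R m.+1 (1 + 2 / M) (expR (2 / M))); rewrite ?nnegrE ?expR_ge0 //.
  by apply: addr_ge0 => //; apply: divr_ge0 => //; exact: ltW.
exact: expR_ge1Dx.
Qed.

Lemma Lcomb (R : realType) (n k : nat) :
  ((n + 2 * k)%:R : R) ^+ (n + 2 * k) <=
  (n%:R : R) ^+ n * (expR 2 * (n + 2)%:R ^+ 2) ^+ k * ((k`!)%:R) ^+ 2.
Proof.
elim: k => [|k IH]; first by rewrite muln0 addn0 expr0 mulr1 fact0 expr1n mulr1.
set m := (n + 2 * k)%N in IH *.
have -> : (n + 2 * k.+1 = m + 2)%N by rewrite /m mulnS; lia.
have h1 : ((m + 2)%:R : R) ^+ 2 <= ((n+2)%:R) ^+ 2 * (k.+1)%:R ^+ 2.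
  rewrite -exprMn -natrM; apply: (@lerXn2r R 2); rewrite ?nnegrE ?ler0n // ler_nat /m; nia.
have h2 := L1 R m.
have h0 : 0 <= expR 2 :> R by exact: expR_ge0.
have -> : ((m + 2)%:R : R) ^+ (m + 2) = ((m + 2)%:R : R) ^+ m * ((m + 2)%:R : R) ^+ 2.
  by rewrite exprD.
have -> : (n%:R : R) ^+ n * (expR 2 * (n + 2)%:R ^+ 2) ^+ k.+1 * ((k.+1`!)%:R) ^+ 2
   = ((n%:R : R) ^+ n * (expR 2 * (n + 2)%:R ^+ 2) ^+ k * ((k`!)%:R) ^+ 2)
     * (expR 2 * (((n+2)%:R) ^+ 2 * (k.+1)%:R ^+ 2)).
  by rewrite factS natrM exprS; ring.
move: IH h1 h2.
set A := (n%:R : R) ^+ n * _ ^+ k * _.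
set X := ((m + 2)%:R : R) ^+ m.
set Y := ((m + 2)%:R : R) ^+ 2.
set Z := (m%:R : R) ^+ m.
set W := ((n+2)%:R : R) ^+ 2 * _.
move=> IH h1 h2.
have hX : 0 <= X by rewrite exprn_ge0.
have hY : 0 <= Y by rewrite exprn_ge0.
have hZ : 0 <= Z by rewrite exprn_ge0.
apply: (le_trans (ler_wpM2l hX h1)).
apply: (le_trans (ler_wpM2r (le_trans hY h1) h2)).
have -> : expR 2 * Z * W = Z * (expR 2 * W) by ring.
by apply: ler_wpM2r => //; rewrite mulr_ge0 // (le_trans hY h1).
Qed.
Lemma mterm_abs (R : realType) (f : R -> R) n p k :
  (forall r, 0 <= r -> 0 <= f r) -> 0 <= p ->
  `|mterm f n p k| = p ^+ k / (k`!)%:R * cmom f (n + 2 * k).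
Proof.
move=> hf hp; rewrite /mterm normrM normrM normrM normrX normrN1 expr1n mul1r.
rewrite normrV ?unitfE ?pnatr_eq0 -?lt0n ?fact_gt0 //.
rewrite ger0_norm ?exprn_ge0 // ger0_norm ?ler0n // ger0_norm //.
exact: cmom_ge0.
Qed.

Lemma epsfacts {R : realType} {P B : R} : 0 <= P -> 0 <= B ->
  let e := (4 * (P + 1) * (B + 1))^-1 in
  0 < e /\ e <= 1 /\ P ^+ 2 * e ^+ 4 * B <= 16^-1.
Proof.
move=> hP hB e.
have hD : 0 < 4 * (P + 1) * (B + 1) by apply: mulr_gt0; [apply: mulr_gt0|]; lra.
have he : 0 < e by rewrite /e invr_gt0.
have hE : e * (4 * (P + 1) * (B + 1)) = 1 by rewrite /e mulVf ?gt_eqF.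
have h1 : e <= 1 by nra.
have hPe : P * e <= 4^-1 by nra.
have hBe : B * e <= 4^-1 by nra.
split => //; split => //.
have -> : P ^+ 2 * e ^+ 4 * B = (P * e) ^+ 2 * (B * e) * e by ring.
have hPe0 : 0 <= P * e by nra.
have hBe0 : 0 <= B * e by nra.
have h16 : (P * e) ^+ 2 <= 16^-1 by rewrite expr2; nra.
have hq : 0 <= (P * e) ^+ 2 by rewrite exprn_ge0.
have hb : (B * e) * e <= 1 by nra.
rewrite -mulrA; apply: le_trans h16.
have := ler_wpM2l hq hb; rewrite mulr1 //.
Qed.

Lemma id1 (R : comRingType) (P e A B G : R) k :
  (P ^+ k) ^+ 2 * (e ^+ (4 * k) * (A * B ^+ k * G)) = A * G * (P ^+ 2 * e ^+ 4 * B) ^+ k.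
Proof. rewrite [in RHS]exprMn [in RHS]exprMn -![in RHS]exprM -exprM (mulnC k 2%N). ring. Qed.

Lemma id2 (R : realType) (A G : R) k :
  ((A + 1) * 4^-1 ^+ k) ^+ 2 * G = (A + 1) ^+ 2 * G * (16^-1) ^+ k.
Proof.
rewrite exprMn -exprM mulnC exprM.
have -> : (4^-1 : R) ^+ 2 = 16^-1 by rewrite exprVn; congr GRing.inv; rewrite expr2 -natrM.
ring.
Qed.

Lemma Kb (R : realType) (f : R -> R) n :
  cond1 f -> cond2b f -> forall P : R, 0 <= P ->
  exists C : R, exists K : nat, 0 <= C /\ forall k, (K <= k)%N ->
    forall p, 0 <= p <= P -> `|mterm f n p k| <= C * (4^-1) ^+ k.
Proof.
move=> [[F hF] _] [_ h2b] P hP.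
have hf : forall r, 0 <= r -> 0 <= f r by move=> r /hF /andP[].
set B : R := expR 2 * (n + 2)%:R ^+ 2.
set A : R := n%:R ^+ n.
have hB : 0 <= B by rewrite mulr_ge0 ?expR_ge0 ?exprn_ge0.
have hA : 0 <= A by rewrite exprn_ge0.
have [he0 [he1 heB]] := epsfacts hP hB.
set e := (4 * (P + 1) * (B + 1))^-1 in he0 he1 heB.
case: (h2b e he0) => N hN.
exists (A + 1), N.+1; split; first lra.
move=> k hk p /andP[hp0 hpP].
rewrite mterm_abs //.
set m := (n + 2 * k)%N.
have hmN : (N <= m)%N by rewrite /m; lia.
have hm0 : (0 < m)%N by rewrite /m; lia.
set a := cmom f m.
have ha : 0 <= a by exact: cmom_ge0.
have hpow := hN m hmN.
have hm0R : (m%:R : R) != 0 by rewrite pnatr_eq0 -lt0n.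
have ham : a <= (e * Num.sqrt m%:R) ^+ m.
  have -> : a = (a `^ (m%:R^-1)) ^+ m.
    by rewrite -powR_mulrn ?powR_ge0 // -powRrM mulVf // powRr1.
  apply: (@lerXn2r R m) => //; rewrite nnegrE ?powR_ge0 //.
  by rewrite mulr_ge0 ?sqrtr_ge0 // ltW.
have ha2 : a ^+ 2 <= (e ^+ 2 * m%:R) ^+ m.
  have -> : (e ^+ 2 * m%:R) ^+ m = ((e * Num.sqrt m%:R) ^+ m) ^+ 2.
    have -> : e ^+ 2 * m%:R = (e * Num.sqrt m%:R) ^+ 2 by rewrite exprMn sqr_sqrtr ?ler0n.
    by rewrite -!exprM mulnC.
  apply: (@lerXn2r R 2); rewrite ?nnegrE //.
  by rewrite exprn_ge0 // mulr_ge0 ?sqrtr_ge0 // ltW.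
have hcomb := Lcomb R n k.
rewrite -/m -/A -/B in hcomb.
set G : R := (k`!)%:R ^+ 2 in hcomb.
have hG : 0 < G by rewrite exprn_gt0 // ltr0n fact_gt0.
have hq : 0 <= 4^-1 :> R by rewrite invr_ge0; lra.
rewrite -(@ler_pXn2r R 2) // ?nnegrE; first last.
- by rewrite mulr_ge0 // ?exprn_ge0 //; lra.
- by rewrite mulr_ge0 ?divr_ge0 ?exprn_ge0 ?ler0n.
have -> : (p ^+ k / (k`!)%:R * a) ^+ 2 = (p ^+ k) ^+ 2 * a ^+ 2 / G.
  by rewrite /G !exprMn exprVn; ring.
rewrite ler_pdivrMr //.
have s1 : (p ^+ k) ^+ 2 * a ^+ 2 <= (P ^+ k) ^+ 2 * (e ^+ 2 * m%:R) ^+ m.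
  apply: ler_pM; rewrite ?exprn_ge0 //.
  apply: (@lerXn2r R 2); rewrite ?nnegrE ?exprn_ge0 //.
  by apply: (@lerXn2r R k); rewrite ?nnegrE.
apply: (le_trans s1).
have s2 : (e ^+ 2 * m%:R) ^+ m <= e ^+ (4 * k) * (A * B ^+ k * G).
  have he0' : 0 <= e by exact: ltW.
  rewrite exprMn; apply: ler_pM; rewrite ?exprn_ge0 //.
  rewrite -exprM; apply: ler_wiXn2l => //; by rewrite /m mulnDr mulnA leq_addl.
have hPk : 0 <= (P ^+ k) ^+ 2 by rewrite exprn_ge0 // exprn_ge0.
apply: (le_trans (ler_wpM2l hPk s2)).
have -> : (P ^+ k) ^+ 2 * (e ^+ (4 * k) * (A * B ^+ k * G)) =
   A * G * (P ^+ 2 * e ^+ 4 * B) ^+ k.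
  exact: id1.
have s3 : (P ^+ 2 * e ^+ 4 * B) ^+ k <= (16^-1) ^+ k.
  have he0' : 0 <= e := ltW he0.
  apply: (@lerXn2r R k) => //; rewrite nnegrE; first by rewrite !mulr_ge0 ?exprn_ge0.
  by rewrite invr_ge0 ler0n.
have hAG : 0 <= A * G by rewrite mulr_ge0 // (ltW hG).
apply: (le_trans (ler_wpM2l hAG s3)).
have -> : ((A + 1) * 4^-1 ^+ k) ^+ 2 * G = (A + 1) ^+ 2 * G * (16^-1) ^+ k.
  exact: id2.
apply: ler_wpM2r; first by rewrite exprn_ge0 //; lra.
apply: ler_wpM2r; first exact: (ltW hG).
rewrite expr2; nra.
Qed.
Lemma geo_eq (R : realType) (N j : nat) :
  (\sum_(N <= k < N + j) (4^-1 : R) ^+ k) * (1 - 4^-1) = 4^-1 ^+ N - 4^-1 ^+ (N + j).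
Proof.
elim: j => [|j IH]; first by rewrite addn0 big_geq // mul0r subrr.
rewrite addnS big_nat_recr ?leq_addr //= mulrDl IH exprS; ring.
Qed.

Lemma geo_le (R : realType) (N N' : nat) :
  \sum_(N <= k < N') (4^-1 : R) ^+ k <= 2 * 4^-1 ^+ N.
Proof.
have hq0 : 0 <= (4^-1 : R) ^+ N by rewrite exprn_ge0 // invr_ge0 ler0n.
case: (leqP N N') => hNN'; last first.
  by rewrite big_geq ?(ltnW hNN') // mulr_ge0.
rewrite -(subnKC hNN').
set S := \sum_(_ <= _ < _) _.
have := geo_eq R N (N' - N); rewrite -/S => hS.
have hr : 0 <= (4^-1 : R) ^+ (N + (N' - N)) by rewrite exprn_ge0 // invr_ge0 ler0n.
have h4 : (4^-1 : R) * 4 = 1 by rewrite mulVf // pnatr_eq0.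
nra.
Qed.

Lemma tail_le (R : realType) (u : nat -> R) (C : R) (K N N' : nat) :
  0 <= C -> (K <= N)%N -> (forall k, (K <= k)%N -> `|u k| <= C * 4^-1 ^+ k) ->
  \sum_(N <= k < N') `|u k| <= 2 * C * 4^-1 ^+ N.
Proof.
move=> hC hKN hu.
apply: le_trans (_ : \sum_(N <= k < N') C * 4^-1 ^+ k <= _).
  rewrite big_nat [X in _ <= X]big_nat; apply: ler_sum => k /andP[hk _].
  apply: hu; exact: leq_trans hKN hk.
rewrite -mulr_sumr -mulrA mulrCA; apply: ler_wpM2l => //; exact: geo_le.
Qed.

Lemma absconv (R : realType) (f : R -> R) n :
  cond1 f -> cond2b f -> forall p : R, 0 <= p ->
  cvgn (series (fun k => `|mterm f n p k|)).
Proof.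
move=> h1 h2 p hp.
have [C [K [hC hK]]] := @Kb R f n h1 h2 p hp.
have hK' : forall k, (K <= k)%N -> `| `|mterm f n p k| | <= C * 4^-1 ^+ k.
  by move=> k hk; rewrite normr_id; apply: hK => //; rewrite hp lexx.
have hmono : {homo series (fun k => `|mterm f n p k|) : a b / (a <= b)%N >-> a <= b}.
  move=> a b hab; rewrite /series /=.
  exact: (@nondecreasing_series R (fun k => `|mterm f n p k|) xpredT 0%N).
apply: nondecreasing_is_cvgn => //.
exists (series (fun k => `|mterm f n p k|) K + 2 * C * 4^-1 ^+ K).
move=> _ [N _ <-].
case: (leqP N K) => hNK.
  have := hmono _ _ hNK.
  have : 0 <= 2 * C * 4^-1 ^+ K by rewrite !mulr_ge0 // exprn_ge0 // invr_ge0 ler0n.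
  lra.
rewrite /series /= (big_cat_nat (leq0n K) (ltnW hNK)) /=.
apply: lerD => //.
apply: (@tail_le R (mterm f n p) C K K N hC (leqnn K)).
by move=> k hk; apply: hK => //; rewrite hp lexx.
Qed.

Theorem lemma8 (R : realType) (f : R -> R) (n : nat) :
  cond1 f -> cond2b f ->
  (forall p : R, 0 <= p ->
     exists l : R,
       (fun N : nat => \sum_(0 <= k < N) `|mterm f n p k|) @ \oo --> l) /\
  (forall P : R, 0 <= P ->
     exists S : R -> R, forall eps : R, 0 < eps ->
       exists N0 : nat, forall N : nat, (N0 <= N)%N ->
         forall p : R, 0 <= p <= P -> `|mpartial f n p N - S p| < eps).
Proof.
move=> h1 h2; split.
  move=> p hp; exists (limn (series (fun k => `|mterm f n p k|))).
  exact: (@absconv R f n h1 h2 p hp).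
move=> P hP.
have [C [K [hC hK]]] := @Kb R f n h1 h2 P hP.
exists (fun p => limn (series (mterm f n p))) => eps heps.
have hq : `|(4^-1 : R)| < 1 by rewrite ger0_norm ?invr_ge0 ?ler0n // invf_lt1 // ltr1n.
have hd : 0 < eps / (4 * (C + 1)) by rewrite divr_gt0 // mulr_gt0 //; lra.
have := cvg_expr hq; move/cvgrPdist_lt => /(_ _ hd) [M _ hM].
exists (maxn K M) => N hN p /andP[hp0 hpP].
have hKN : (K <= N)%N by exact: leq_trans (leq_maxl K M) hN.
have hMN : (M <= N)%N by exact: leq_trans (leq_maxr K M) hN.
have hqN : (4^-1 : R) ^+ N < eps / (4 * (C + 1)).
  by have := hM N hMN; rewrite /= sub0r normrN ger0_norm // exprn_ge0 // invr_ge0 ler0n.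
have cv : cvgn (series (mterm f n p)) by apply: normed_cvg; exact: (@absconv R f n h1 h2 p hp0).
have he2 : 0 < eps / 2 by rewrite divr_gt0.
have := cv; move/cvgrPdist_lt => /(_ _ he2) [M' _ hM'].
set N' := maxn N M'.
have h1' := hM' N' (leq_maxr N M').
set S := limn _ in h1' *.
have htail : `|series (mterm f n p) N' - series (mterm f n p) N| <= 2 * C * 4^-1 ^+ N.
  rewrite /series /= (big_cat_nat (leq0n N) (leq_maxl N M')) /= addrC addrK.
  apply: le_trans (ler_norm_sum _ _ _) _.
  apply: (@tail_le R (mterm f n p) C K N N' hC hKN).
  by move=> k hk; apply: hK => //; rewrite hp0 hpP.
have hCq : 2 * C * 4^-1 ^+ N < eps / 2.
  have hq0 : 0 <= (4^-1 : R) ^+ N by rewrite exprn_ge0 // invr_ge0 ler0n.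
  have hCe : (4 * (C + 1)) * (eps / (4 * (C + 1))) = eps.
    by rewrite mulrC divfK // mulf_neq0 // gt_eqF //; lra.
  nra.
rewrite /mpartial.
have -> : \sum_(0 <= k < N) mterm f n p k = series (mterm f n p) N by [].
have := ler_distD (series (mterm f n p) N') (series (mterm f n p) N) S.
rewrite distrC in h1'.
move=> htri.
have : `|series (mterm f n p) N - series (mterm f n p) N'| <= 2 * C * 4^-1 ^+ N by rewrite distrC.
lra.
Qed.
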